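(* Let $e_1<e_2<e_3<e_4$ be distinct reals, $h>0$, and consider on $M_h$ the functions $\eta_1=\sum_{i<j}\ell_{ij}^2\sum_{k\ne i,j}e_k$ and $\eta_2=\sum_{i<j}\ell_{ij}^2\prod_{k\ne i,j}e_k$. For $\alpha\neq0$ and $\beta\in\mathbb R$, let $(\eta_1',\eta_2')$ be the functions obtained from the same formulas with each $e_i$ replaced by $\alpha e_i+\beta$. Then the integrable system $(\eta_1',\eta_2')$ on $M_h$ is topologically equivalent to $(\eta_1,\eta_2)$.
   Context: $\mathbf L=(\ell_{12},\ell_{13},\ell_{14},\ell_{23},\ell_{24},\ell_{34})\in\mathbb R^6\cong\mathfrak{so}(4)^*$ with the Lie–Poisson bracket of $\mathfrak{so}(4)$ (extending $\ell_{ji}=-\ell_{ij}$: $\{\ell_{ij},\ell_{jk}\}=-\ell_{ik}$ for distinct $i,j,k$, and $\{\ell_{ij},\ell_{kl}\}=0$ when $\{i,j\}\cap\{k,l\}=\emptyset$). $M_h=\{\mathbf L:\sum_{i<j}\ell_{ij}^2=2h,\ \ell_{12}\ell_{34}-\ell_{13}\ell_{24}+\ell_{14}\ell_{23}=0\}\cong S^2\times S^2$ is a symplectic leaf. Topological equivalence of integrable systems means there is a homeomorphism of the phase space mapping the Liouville foliation (connected components of fibres of the momentum map) of one system onto that of the other. *)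

(* Defs.v *)
From HB Require Import structures.
From mathcomp Require Import all_boot all_order all_algebra.
From mathcomp Require Import all_classical all_reals all_analysis.
Set Implicit Arguments. Unset Strict Implicit. Unset Printing Implicit Defensive.
Import Order.TTheory GRing.Theory Num.Theory.
Import numFieldNormedType.Exports.
Local Open Scope classical_set_scope.
Local Open Scope ring_scope.

Section Defs.
Variable R : realType.
Local Notation vec6 := (matrix R 1 6).

Definition l12 (L : vec6) := L ord0 (inord 0).
Definition l13 (L : vec6) := L ord0 (inord 1).
Definition l14 (L : vec6) := L ord0 (inord 2).
Definition l23 (L : vec6) := L ord0 (inord 3).
Definition l24 (L : vec6) := L ord0 (inord 4).
Definition l34 (L : vec6) := L ord0 (inord 5).

Definition Mh (h : R) : set vec6 :=
  [set L | l12 L ^+ 2 + l13 L ^+ 2 + l14 L ^+ 2 + l23 L ^+ 2 + l24 L ^+ 2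
           + l34 L ^+ 2 = 2 * h /\
           l12 L * l34 L - l13 L * l24 L + l14 L * l23 L = 0].

Definition eta1 (e1 e2 e3 e4 : R) (L : vec6) : R :=
  l12 L ^+ 2 * (e3 + e4) + l13 L ^+ 2 * (e2 + e4) + l14 L ^+ 2 * (e2 + e3)
  + l23 L ^+ 2 * (e1 + e4) + l24 L ^+ 2 * (e1 + e3) + l34 L ^+ 2 * (e1 + e2).

Definition eta2 (e1 e2 e3 e4 : R) (L : vec6) : R :=
  l12 L ^+ 2 * (e3 * e4) + l13 L ^+ 2 * (e2 * e4) + l14 L ^+ 2 * (e2 * e3)
  + l23 L ^+ 2 * (e1 * e4) + l24 L ^+ 2 * (e1 * e3) + l34 L ^+ 2 * (e1 * e2).

Definition momentum (e1 e2 e3 e4 : R) (L : vec6) : R * R :=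
  (eta1 e1 e2 e3 e4 L, eta2 e1 e2 e3 e4 L).
End Defs.

Definition liouville_leaf {T : topologicalType} {U : Type}
    (M : set T) (F : T -> U) (S : set T) : Prop :=
  exists2 x, M x & S = connected_component (M `&` (F @^-1` [set F x])) x.

Definition homeomorphism_on {T : topologicalType} (M : set T) (phi : T -> T) : Prop :=
  {within M, continuous phi} /\
  exists psi : T -> T, {within M, continuous psi} /\
    (forall x, M x -> M (phi x) /\ psi (phi x) = x) /\
    (forall y, M y -> M (psi y) /\ phi (psi y) = y).

Definition top_equivalent {T : topologicalType} {U V : Type}
    (M : set T) (F : T -> U) (G : T -> V) : Prop :=
  exists phi : T -> T, homeomorphism_on M phi /\
    (forall S, liouville_leaf M F S -> liouville_leaf M G (phi @` S)) /\
    (forall S', liouville_leaf M G S' ->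
        exists2 S, liouville_leaf M F S & phi @` S = S').

(* Main.v *)
Require Import Defs.
From HB Require Import structures.
From mathcomp Require Import all_boot all_order all_algebra.
From mathcomp Require Import all_classical all_reals all_analysis.
From mathcomp Require Import ring lra.
Import Order.TTheory GRing.Theory Num.Theory.
Import numFieldNormedType.Exports.
Local Open Scope classical_set_scope.
Local Open Scope ring_scope.

Lemma fibre_eq (R : realType) (e1 e2 e3 e4 h alpha beta : R) (x : 'M[R]_(1,6)) :
  alpha != 0 -> Mh h x ->
  Mh h `&` (momentum (alpha * e1 + beta) (alpha * e2 + beta)
              (alpha * e3 + beta) (alpha * e4 + beta)) @^-1`
     [set momentum (alpha * e1 + beta) (alpha * e2 + beta)
              (alpha * e3 + beta) (alpha * e4 + beta) x]
  = Mh h `&` (momentum e1 e2 e3 e4) @^-1` [set momentum e1 e2 e3 e4 x].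
Proof.
move=> a0 Mx.
have E1 : forall L, Mh h L -> eta1 (alpha * e1 + beta) (alpha * e2 + beta)
              (alpha * e3 + beta) (alpha * e4 + beta) L
              = alpha * eta1 e1 e2 e3 e4 L + 4 * beta * h.
  move=> L [HL _]; rewrite /eta1.
  have -> : 4 * beta * h = 2 * beta * (2 * h) by ring.
  rewrite -HL; ring.
have E2 : forall L, Mh h L -> eta2 (alpha * e1 + beta) (alpha * e2 + beta)
              (alpha * e3 + beta) (alpha * e4 + beta) L
              = alpha ^+ 2 * eta2 e1 e2 e3 e4 L + alpha * beta * eta1 e1 e2 e3 e4 L
                + beta ^+ 2 * (2 * h).
  move=> L [HL _]; rewrite /eta1 /eta2 -HL; ring.
apply/seteqP; split => y [My Hy]; split => //; move: Hy; rewrite /= /momentum.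
- case=> H1 H2.
  rewrite (E1 _ My) (E1 _ Mx) in H1.
  have H1' : eta1 e1 e2 e3 e4 y = eta1 e1 e2 e3 e4 x.
    by move/addIr: H1 => /mulfI; apply.
  rewrite (E2 _ My) (E2 _ Mx) H1' in H2.
  move/addIr/addIr: H2 => /mulfI H2'.
  by rewrite H1' H2' // expf_neq0.
- by case=> H1 H2; rewrite (E1 _ My) (E1 _ Mx) (E2 _ My) (E2 _ Mx) H1 H2.
Qed.

Theorem lemma2 (R : realType) (e1 e2 e3 e4 h alpha beta : R) :
  e1 < e2 -> e2 < e3 -> e3 < e4 -> 0 < h -> alpha != 0 ->
  top_equivalent (Mh h)
    (momentum (alpha * e1 + beta) (alpha * e2 + beta)
              (alpha * e3 + beta) (alpha * e4 + beta))
    (momentum e1 e2 e3 e4).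
Proof.
move=> _ _ _ _ a0.
have cid : {within Mh h, continuous (@id 'M[R]_(1,6))}.
  by apply: continuous_subspaceT => z; apply: cvg_id.
exists id; split; first by split => //; exists id; split.
split.
- move=> S [x Mx ->]; rewrite image_id; exists x => //.
  by rewrite fibre_eq.
- move=> S [x Mx ->]; exists (connected_component (Mh h `&` (momentum e1 e2 e3 e4) @^-1` [set momentum e1 e2 e3 e4 x]) x); last by rewrite image_id.
  by exists x => //; rewrite fibre_eq.
Qed.
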